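(* Let $\Sigma$ be an alphabet, $\triangleleft\notin\Sigma$, and let $L\subseteq\Sigma^*$ be context-free. Then the language $$\mathrm{Next}(L)=\bigcup_{n\in\mathbb N}\bigl\{\langle\sigma_2,\sigma_1\rangle\cdots\langle\sigma_n,\sigma_{n-1}\rangle\langle\triangleleft,\sigma_n\rangle \;\big|\; \sigma_1,\dots,\sigma_n\in\Sigma,\ \sigma_1\cdots\sigma_n\in L\bigr\}$$ over the alphabet $(\Sigma\cup\{\triangleleft\})\times\Sigma$ is context-free. *)

(* Defs.v *)
From mathcomp Require Import all_boot.
From Stdlib Require Import Relation_Operators.

Set Implicit Arguments.
Unset Strict Implicit.
Unset Printing Implicit Defensive.

Record cfg (N T : finType) := CFG {
  cfg_start : N;
  cfg_prods : seq (N * seq (N + T))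
}.

Definition cfg_step (N T : finType) (G : cfg N T) (s s' : seq (N + T)) : Prop :=
  exists (u v : seq (N + T)) (A : N) (rhs : seq (N + T)),
    (A, rhs) \in cfg_prods G /\ s = u ++ inl A :: v /\ s' = u ++ rhs ++ v.

Definition cfg_derives (N T : finType) (G : cfg N T) : seq (N + T) -> seq (N + T) -> Prop :=
  clos_refl_trans _ (@cfg_step N T G).

Definition cfg_lang (N T : finType) (G : cfg N T) (w : seq T) : Prop :=
  cfg_derives G [:: inl (cfg_start G)] (map inr w).

Definition context_free (T : finType) (L : seq T -> Prop) : Prop :=
  exists (N : finType) (G : cfg N T), forall w, L w <-> cfg_lang G w.

(* The end marker \triangleleft is modelled by None in option Sigma.
   For s = s_1 ... s_n, next_word s = <s_2,s_1> ... <s_n,s_{n-1}> <None,s_n>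
   (and the empty word when n = 0). *)
Definition next_word (S : finType) (s : seq S) : seq (option S * S) :=
  zip (rcons (map Some (behead s)) None) s.

Definition Next (S : finType) (L : seq S -> Prop) (w : seq (option S * S)) : Prop :=
  exists s, L s /\ w = next_word s.

(* Main.v *)
Require Import Defs.
From mathcomp Require Import all_boot.
From Stdlib Require Import Relation_Operators Operators_Properties.

Set Implicit Arguments.
Unset Strict Implicit.
Unset Printing Implicit Defensive.

Section Gen.
Variables (N T : finType) (G : cfg N T).

Inductive gen : seq (N + T) -> seq T -> Prop :=
| gen_nil : gen [::] [::]
| gen_t a s w : gen s w -> gen (inr a :: s) (a :: w)
| gen_n A rhs s w1 w2 : (A, rhs) \in cfg_prods G -> gen rhs w1 -> gen s w2 ->
    gen (inl A :: s) (w1 ++ w2).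

Lemma gen_cat x y w1 w2 : gen x w1 -> gen y w2 -> gen (x ++ y) (w1 ++ w2).
Proof.
move=> H Hy; elim: H => /= [|a s w _ IH|A rhs s u1 u2 Hp Hr _ _ IH] //.
- by apply: gen_t.
- rewrite -catA; exact: gen_n Hp Hr IH.
Qed.

Lemma gen_split x y w : gen (x ++ y) w ->
  exists w1 w2, w = w1 ++ w2 /\ gen x w1 /\ gen y w2.
Proof.
elim: x w => [|c x IH] w /= H.
  by exists [::], w; split; [|split; [constructor|]].
inversion H; subst.
- have [w1 [w2 [-> [H1 H2]]]] := IH _ H3.
  by exists (a :: w1), w2; split; [|split; [constructor|]].
- have [u1 [u2 [-> [K1 K2]]]] := IH _ H5.
  exists (w1 ++ u1), u2; rewrite catA; split => //; split => //.
  exact: gen_n H2 H3 K1.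
Qed.

Lemma gen_map w : gen (map inr w) w.
Proof. by elim: w => [|a w IH] /=; constructor. Qed.

Lemma derives_ctx u v s t : cfg_derives G s t -> cfg_derives G (u ++ s ++ v) (u ++ t ++ v).
Proof.
elim => [x y [u' [v' [A [rhs [Hp [-> ->]]]]]]|x|x y z _ H1 _ H2].
- apply: rt_step; exists (u ++ u'), (v' ++ v), A, rhs; split => //.
  by rewrite -!catA /=; split => //; rewrite -!catA.
- exact: rt_refl.
- exact: rt_trans H1 H2.
Qed.

Lemma gen_derives s w : gen s w -> cfg_derives G s (map inr w).
Proof.
elim => [|a s' w' _ IH|A rhs s' w1 w2 Hp _ IH1 _ IH2].
- exact: rt_refl.
- by have := derives_ctx [:: inr a] [::] IH; rewrite /= !cats0.
- apply: (@rt_trans _ _ _ (rhs ++ s')).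
    by apply: rt_step; exists [::], s', A, rhs.
  rewrite map_cat; apply: (@rt_trans _ _ _ (map inr w1 ++ s')).
    by have := derives_ctx [::] s' IH1.
  by have := derives_ctx (map inr w1) [::] IH2; rewrite !cats0.
Qed.

Lemma gen_back s s' w : cfg_step G s s' -> gen s' w -> gen s w.
Proof.
move=> [u [v [A [rhs [Hp [-> ->]]]]]] H.
have [wu [w' [-> [Hu H']]]] := gen_split H.
have [wr [wv [-> [Hr Hv]]]] := gen_split H'.
apply: gen_cat => //; exact: gen_n Hp Hr Hv.
Qed.

Lemma derives_gen s w : cfg_derives G s (map inr w) -> gen s w.
Proof.
suff K : forall s t, clos_refl_trans_1n _ (cfg_step G) s t ->
    forall w, t = map inr w -> gen s w.
  by move=> H; apply: (K _ _ (clos_rt_rt1n _ _ _ _ H)).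
move=> s0 t; elim => [x w0 ->|x y z Hs _ IH w0 Et]; first exact: gen_map.
exact: gen_back Hs (IH _ Et).
Qed.

Lemma lang_gen w : cfg_lang G w <-> gen [:: inl (cfg_start G)] w.
Proof. split; [exact: derives_gen|exact: gen_derives]. Qed.

End Gen.

Section Next.
Variables (N S : finType).
Local Notation OS := (option S).
Local Notation NT := (option (N * OS * OS)).
Local Notation TT := (OS * S)%type.
Local Notation sym' := (NT + TT)%type.

Definition allOS : seq OS := enum (@predT OS).
Lemma allOS_mem f : f \in allOS.
Proof. by rewrite mem_enum. Qed.

Fixpoint annots (s : seq (N + S)) (e : OS) : seq (OS * seq sym') :=
  match s with
  | [::] => [:: (e, [::])]
  | inr a :: s1 => [seq (Some a, inr (p.1, a) :: p.2) | p <- annots s1 e]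
  | inl A :: s1 => flatten [seq [seq (f, inl (Some (A, f, p.1)) :: p.2) | f <- allOS]
                            | p <- annots s1 e]
  end.

Lemma annots_nil f e s' : (f, s') \in annots [::] e -> f = e /\ s' = [::].
Proof. by rewrite inE => /eqP [-> ->]. Qed.

Lemma annots_t a s f e s' : (f, s') \in annots (inr a :: s) e <->
  exists g s1', [/\ f = Some a, s' = inr (g, a) :: s1' & (g, s1') \in annots s e].
Proof.
split => /=.
  by case/mapP => [[g s1'] Hin [-> ->]]; exists g, s1'.
by case=> g [s1' [-> -> H]]; apply/mapP; exists (g, s1').
Qed.

Lemma annots_n A s f e s' : (f, s') \in annots (inl A :: s) e <->
  exists g s1', s' = inl (Some (A, f, g)) :: s1' /\ (g, s1') \in annots s e.
Proof.
split => /=.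
  case/flatten_mapP => [[g s1'] Hin] /mapP [f' _ [-> ->]]; by exists g, s1'.
case=> g [s1' [-> H]]; apply/flatten_mapP; exists (g, s1') => //.
by apply/mapP; exists f => //; exact: allOS_mem.
Qed.

Variable G : cfg N S.

Definition prods' : seq (NT * seq sym') :=
  [seq (None, [:: inl (Some (cfg_start G, f, None))]) | f <- allOS] ++
  flatten [seq flatten [seq [seq (Some (p.1, q.1, e), q.2) | q <- annots p.2 e]
                       | e <- allOS] | p <- cfg_prods G].

Definition G' : cfg NT TT := @CFG NT TT None prods'.

End Next.

Section Proofs.
Variables (N S : finType) (G : cfg N S).
Local Notation OS := (option S).

Lemma prods'_some A f e r : (Some (A, f, e), r) \in prods' G <->
  exists rhs, (A, rhs) \in cfg_prods G /\ (f, r) \in annots rhs e.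
Proof.
rewrite /prods' mem_cat; split.
  case/orP; first by case/mapP => ? _ [].
  case/flatten_mapP => [[A' rhs] Hp] /flatten_mapP [e' _] /mapP [[f' r'] Hq [-> -> -> ->]].
  by exists rhs.
case=> rhs [Hp Hq]; apply/orP; right; apply/flatten_mapP; exists (A, rhs) => //.
apply/flatten_mapP; exists e; first exact: allOS_mem.
by apply/mapP; exists (f, r).
Qed.

Lemma prods'_none r : (None, r) \in prods' G <->
  exists f, r = [:: inl (Some (cfg_start G, f, None))].
Proof.
rewrite /prods' mem_cat; split.
  case/orP; first by case/mapP => f _ [->]; exists f.
  by case/flatten_mapP => p _ /flatten_mapP [e' _] /mapP [q _].
by case=> f ->; apply/orP; left; apply/mapP; exists f => //; exact: allOS_mem.
Qed.

Definition hd (w : seq S) (e : OS) : OS := head e (map Some w).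

Fixpoint nw (w : seq S) (e : OS) : seq (OS * S) :=
  match w with [::] => [::] | a :: w' => (hd w' e, a) :: nw w' e end.

Lemma nw_cat w1 w2 e : nw (w1 ++ w2) e = nw w1 (hd w2 e) ++ nw w2 e.
Proof.
elim: w1 => [|a w1 IH] //=; rewrite IH; congr (_ :: _); congr (_, _).
by case: w1 {IH}.
Qed.

Lemma hd_cat w1 w2 e : hd (w1 ++ w2) e = hd w1 (hd w2 e).
Proof. by case: w1. Qed.

Lemma next_nw s : next_word s = nw s None.
Proof.
rewrite /next_word; move: None; elim: s => [|a s IH] e //=.
case: s IH => [|b s] IH //=.
by move: (IH e) => /= ->.
Qed.

Lemma complete s w : gen G s w -> forall e,
  exists s', (hd w e, s') \in annots s e /\ gen (G' G) s' (nw w e).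
Proof.
elim => [|a s1 w1 _ IH|A rhs s1 w1 w2 Hp _ IH1 _ IH2] e.
- by exists [::]; split; [rewrite inE|constructor].
- have [s1' [H1 H2]] := IH e.
  exists (inr (hd w1 e, a) :: s1'); split; last by constructor.
  by apply/annots_t; exists (hd w1 e), s1'.
- have [s2' [H1 H2]] := IH2 e.
  have [s1' [K1 K2]] := IH1 (hd w2 e).
  exists (inl (Some (A, hd (w1 ++ w2) e, hd w2 e)) :: s2'); split.
    by apply/annots_n; exists (hd w2 e), s2'.
  rewrite nw_cat; apply: gen_n K2 H2.
  by apply/prods'_some; exists rhs; rewrite hd_cat.
Qed.

Lemma sound s' w' : gen (G' G) s' w' -> forall s f e, (f, s') \in annots s e ->
  exists w, [/\ w' = nw w e, f = hd w e & gen G s w].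
Proof.
elim => [|b s1' w1' _ IH|X r' s1' w1' w2' Hp _ IH1 _ IH2] s f e.
- case: s => [|[A|a] s] /=.
  + by move/annots_nil => [-> _]; exists [::]; split => //; constructor.
  + by move/annots_n => [g [s1 [H _]]].
  + by move/annots_t => [g [s1 [_ H _]]].
- case: s => [|[A|a] s] /=.
  + by move/annots_nil => [_ H].
  + by move/annots_n => [g [s1 [H _]]].
  + move/annots_t => [g [s1 [-> [Eb Es] H]]]; subst.
    have [w [-> -> Hw]] := IH _ _ _ H.
    by exists (a :: w); split => //; constructor.
- case: s => [|[A|a] s] /=.
  + by move/annots_nil => [_ H].
  + move/annots_n => [g [s1 [[EX Es] H]]]; subst.
    move/prods'_some: Hp => [rhs [Hp Hr]].
    have [u1 [-> -> Hu1]] := IH1 _ _ _ Hr.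
    have [u2 [-> -> Hu2]] := IH2 _ _ _ H.
    exists (u1 ++ u2); split; [by rewrite nw_cat|by rewrite hd_cat|].
    exact: gen_n Hp Hu1 Hu2.
  + by move/annots_t => [g [s1 [_ H _]]].
Qed.

End Proofs.

Theorem lemma3p4 (Sigma : finType) (L : seq Sigma -> Prop) :
  context_free L -> context_free (Next L).
Proof.
case=> N [G HG]; exists (option (N * option Sigma * option Sigma)), (G' G) => w'.
rewrite /Next; split.
- case=> s [Ls ->]; move/HG/lang_gen: Ls => Hs; apply/lang_gen.
  have [s' [Ha Hg]] := complete Hs None.
  move/annots_n: Ha => [g [s1' [Es /annots_nil [Eg E1]]]]; subst.
  rewrite next_nw -[nw s None]cats0; apply: gen_n; last by constructor.
    by apply/prods'_none; eexists.
  exact: Hg.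
- move/lang_gen => H; inversion H; subst.
  move/prods'_none: H2 => [f Er]; subst.
  inversion H5; subst; rewrite cats0.
  have Ha : (f, [:: inl (Some (cfg_start G, f, None))]) \in annots [:: inl (cfg_start G)] None.
    by apply/annots_n; exists None, [::]; split => //; rewrite inE.
  have [w [-> _ Hw]] := sound H3 Ha.
  by exists w; split; [apply/HG/lang_gen|rewrite next_nw].
Qed.
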